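(* Let $m\geq 1$ be an integer and $\omega\in[-1,1]$. The function $$W_{m,\omega}(x)=m-1-\frac{m}{1-x}+\frac{1-\omega x}{(1-x)^{m+1}(1-2\omega x+x^2)}$$ is absolutely monotonic on $(0,1)$, i.e. it has derivatives of all orders there and $W_{m,\omega}^{(n)}(x)\geq 0$ for all $n=0,1,2,\dots$ and all $x\in(0,1)$. *)

(* Defs.v *)
From Stdlib Require Import Reals.
From Coquelicot Require Import Coquelicot.
Open Scope R_scope.

Definition W (m : nat) (omega : R) (x : R) : R :=
  INR m - 1 - INR m / (1 - x)
  + (1 - omega * x) / ((1 - x) ^ (m + 1) * (1 - 2 * omega * x + x ^ 2)).

Definition absolutely_monotonic_on (f : R -> R) (a b : R) : Prop :=
  forall (n : nat) (x : R), a < x < b ->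
    ex_derive_n f n x /\ 0 <= Derive_n f n x.

(* Main.v *)
Require Import Defs.
From Stdlib Require Import Reals Lra Lia Psatz.
From Coquelicot Require Import Coquelicot.
Open Scope R_scope.

Lemma scal_pow (x : R) (k : nat) (c : R) : scal (pow_n x k) c = c * x ^ k.
Proof. rewrite pow_n_pow. unfold scal; simpl; unfold mult; simpl. ring. Qed.

Definition rep (f : R -> R) (a : nat -> R) : Prop :=
  forall x, Rabs x < 1 -> is_pseries a x (f x).

Lemma rep_rad f a : rep f a -> forall x, Rabs x < 1 -> Rbar_lt (Rabs x) (CV_radius a).
Proof.
  intros H x Hx.
  destruct (Rbar_le_lt_dec (CV_radius a) (Rabs x)) as [Hle|Hlt]; [|exact Hlt].
  exfalso.
  set (y := (Rabs x + 1) / 2).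
  assert (Hy0 : 0 <= Rabs x) by apply Rabs_pos.
  assert (Hy : Rabs y < 1) by (unfold y; rewrite Rabs_pos_eq; lra).
  apply (CV_disk_outside a y).
  - eapply Rbar_le_lt_trans; [exact Hle|]. unfold y; simpl; rewrite (Rabs_pos_eq ((Rabs x + 1)/2)) by lra; lra.
  - specialize (H y Hy).
    assert (Hs : ex_series (fun k => scal (pow_n y k) (a k))) by (eexists; exact H).
    apply ex_series_lim_0 in Hs.
    eapply is_lim_seq_ext; [|exact Hs].
    intros n; cbv beta; rewrite scal_pow; ring.
Qed.

Lemma rep_ext f g a : (forall x, Rabs x < 1 -> f x = g x) -> rep f a -> rep g a.
Proof. intros E H x Hx. rewrite <- E by exact Hx. apply H, Hx. Qed.

Lemma rep_plus f g a b : rep f a -> rep g b -> rep (fun x => f x + g x) (PS_plus a b).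
Proof. intros Ha Hb x Hx. apply (is_pseries_plus a b x (f x) (g x)); auto. Qed.

Lemma rep_scal c f a : rep f a -> rep (fun x => c * f x) (PS_scal c a).
Proof. intros Ha x Hx. apply (is_pseries_scal c a x (f x)); auto.
  unfold mult; simpl. ring. Qed.

Lemma rep_mult f g a b : rep f a -> rep g b -> rep (fun x => f x * g x) (PS_mult a b).
Proof. intros Ha Hb x Hx. apply (is_pseries_mult a b x (f x) (g x)); auto.
  apply (rep_rad f); auto. apply (rep_rad g); auto. Qed.

Lemma rep_x f a : rep f a -> rep (fun x => x * f x) (PS_incr_1 a).
Proof. intros Ha x Hx. apply (is_pseries_incr_1 a x (f x)); auto. Qed.

Lemma rep_geom : rep (fun x => / (1 - x)) (fun _ => 1).
Proof. intros x Hx. unfold is_pseries.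
  eapply is_series_ext; [|apply is_series_geom, Hx].
  intros n; cbv beta; rewrite scal_pow; symmetry; apply Rmult_1_l.
Qed.

Definition amrep f := exists a, (forall n, 0 <= a n) /\ rep f a.

Lemma am_plus f g : amrep f -> amrep g -> amrep (fun x => f x + g x).
Proof. intros [a [Pa Ha]] [b [Pb Hb]]. exists (PS_plus a b); split.
  intros n; unfold PS_plus, plus; simpl. specialize (Pa n); specialize (Pb n); lra.
  apply rep_plus; auto. Qed.

Lemma am_scal c f : 0 <= c -> amrep f -> amrep (fun x => c * f x).
Proof. intros Hc [a [Pa Ha]]. exists (PS_scal c a); split.
  intros n; unfold PS_scal, scal; simpl; unfold mult; simpl. specialize (Pa n); nra.
  apply rep_scal; auto. Qed.

Lemma am_mult f g : amrep f -> amrep g -> amrep (fun x => f x * g x).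
Proof. intros [a [Pa Ha]] [b [Pb Hb]]. exists (PS_mult a b); split.
  intros n; unfold PS_mult. apply cond_pos_sum. intros k. specialize (Pa k); specialize (Pb (n-k)%nat); nra.
  apply rep_mult; auto. Qed.

Lemma am_x f : amrep f -> amrep (fun x => x * f x).
Proof. intros [a [Pa Ha]]. exists (PS_incr_1 a); split.
  intros [|n]; simpl. unfold zero; simpl; lra. apply Pa.
  apply rep_x; auto. Qed.

Lemma am_geom : amrep (fun x => / (1 - x)).
Proof. exists (fun _ => 1); split. intros; lra. apply rep_geom. Qed.

Lemma am_ext f g : (forall x, Rabs x < 1 -> f x = g x) -> amrep f -> amrep g.
Proof. intros E [a [Pa Ha]]. exists a; split; auto. eapply rep_ext; eauto. Qed.

Lemma am_abs f : amrep f -> forall (n : nat) (x : R), 0 < x < 1 ->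
    ex_derive_n f n x /\ 0 <= Derive_n f n x.
Proof.
  intros [a [Pa Ha]] n x Hx.
  assert (Hax : Rabs x < 1) by (rewrite Rabs_pos_eq; lra).
  assert (Hloc : locally x (fun y => PSeries a y = f y)).
  { apply (locally_interval _ x (-1) 1); simpl; try lra.
    intros y H1 H2. apply is_pseries_unique. apply Ha. apply Rabs_def1; lra. }
  assert (Hloc' : locally x (fun y => f y = PSeries a y)).
  { eapply filter_imp; [|exact Hloc]. intros y E; simpl; auto. }
  assert (Hr := rep_rad f a Ha x Hax).
  split.
  - eapply ex_derive_n_ext_loc; [exact Hloc|]. apply ex_derive_n_PSeries; auto.
  - rewrite (Derive_n_ext_loc _ _ n x Hloc'). rewrite Derive_n_PSeries by auto.
    assert (Hnn : forall k, 0 <= PS_derive_n n a k * x ^ k).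
    { intros k. unfold PS_derive_n. apply Rmult_le_pos; [|apply pow_le; lra].
      apply Rmult_le_pos; [|apply Pa]. unfold Rdiv. apply Rmult_le_pos. apply pos_INR.
      left; apply Rinv_0_lt_compat. apply lt_0_INR. apply Factorial.lt_O_fact. }
    unfold PSeries.
    assert (Hex : ex_series (fun k => PS_derive_n n a k * x ^ k)).
    { assert (H := CV_radius_inside (PS_derive_n n a) x).
      rewrite CV_radius_derive_n in H. specialize (H Hr).
      eapply ex_series_ext; [|exact H]. intros k; cbv beta; rewrite scal_pow; reflexivity. }
    assert (L : Series (fun k => 0 * (PS_derive_n n a k * x ^ k)) <= Series (fun k => PS_derive_n n a k * x ^ k)).
    { apply Series_le; [|exact Hex]. intros k. specialize (Hnn k). split; lra. }
    rewrite Series_scal_l in L. lra.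
Qed.

Fixpoint uu (t : R) (n : nat) : R :=
  match n with O => 1 | S O => 2 * t | S (S j as k) => 2 * t * uu t k - uu t j end.

Lemma uu_SS t n : uu t (S (S n)) = 2 * t * uu t (S n) - uu t n.
Proof. reflexivity. Qed.

Lemma cassini t n : uu t (S n) * uu t (S n) - 2 * t * uu t n * uu t (S n) + uu t n * uu t n = 1.
Proof.
  induction n as [|n IH].
  - simpl. ring.
  - rewrite uu_SS. rewrite <- IH. ring.
Qed.

Lemma uu_bound t n : 0 <= t <= 1 -> - (INR n + 1) <= uu t n <= INR n + 1.
Proof.
  intros Ht. induction n as [|n IH].
  - simpl. lra.
  - rewrite S_INR.
    assert (C := cassini t n).
    set (a := uu t n) in *. set (b := uu t (S n)) in *.
    assert (E : (b - t * a) * (b - t * a) + (1 - t * t) * (a * a) = b * b - 2 * t * a * b + a * a) by ring.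
    rewrite C in E.
    assert (H0 : 0 <= (1-t*t)*(a*a)) by (apply Rmult_le_pos; nra).
    assert (H1 : (b - t*a) * (b - t*a) <= 1) by lra.
    assert (H2 : -1 <= b - t*a <= 1) by nra.
    assert (H3 : - (INR n + 1) <= t * a <= INR n + 1) by nra.
    lra.
Qed.

Definition vv t n := uu t n * uu t n.

Lemma vv_rec t n : vv t (S (S (S n))) =
  (4*t*t - 1) * vv t (S (S n)) - (4*t*t-1) * vv t (S n) + vv t n.
Proof. unfold vv. rewrite !uu_SS. ring. Qed.

Definition Dp t x := 1 - (4*t*t-1) * x + (4*t*t-1) * x * x - x * x * x.
Definition EE t x N := let p := 4*t*t-1 in
  (- p * vv t (N+2) + p * vv t (N+1) - vv t N) + (p * vv t (N+2) - vv t (N+1)) * x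
  - vv t (N+2) * x * x.

Lemma partial t x N : Dp t x * sum_f_R0 (fun k => vv t k * x ^ k) (N+2)
   = (1 + x) + x ^ (N+3) * EE t x N.
Proof.
  induction N as [|N IH].
  - simpl. unfold Dp, EE, vv. simpl. ring.
  - replace (S N + 2)%nat with (S (N + 2)) by lia. rewrite tech5.
    rewrite Rmult_plus_distr_l, IH.
    replace (S (N+2)) with (S (S (S N))) by lia.
    unfold EE.
    replace (S N + 2)%nat with (S (S (S N))) by lia.
    replace (S N + 1)%nat with (S (S N)) by lia.
    replace (N + 2)%nat with (S (S N)) by lia.
    replace (N + 1)%nat with (S N) by lia.
    replace (S N + 3)%nat with (S (S (S (S N)))) by lia.
    replace (N + 3)%nat with (S (S (S N))) by lia.
    rewrite !vv_rec. simpl pow. unfold Dp. ring.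
Qed.

Lemma Ebound p a b c B x : -1 <= p <= 3 -> 0 <= a <= B -> 0 <= b <= B -> 0<= c <= B -> -1 < x < 1 ->
  -(12*B) <= (-p*a + p*b - c) + (p*a - b)*x - a*x*x <= 12*B.
Proof.
intros. assert (-B <= p*a <= 3*B) by nra. assert (-B <= p*b <= 3*B) by nra.
assert (0 <= x*x <= 1) by nra.
assert (0 <= a*(x*x) <= B) by nra.
assert (-(4*B) <= (p*a-b)*x <= 4*B) by nra. replace (a*x*x) with (a*(x*x)) by ring. lra. Qed.

Lemma lim_poly x : Rabs x < 1 ->
  is_lim_seq (fun n => INR (S n) * INR (S (S n)) * Rabs x ^ n) 0.
Proof.
  intros Hx.
  set (a := PS_derive (PS_derive (fun _ : nat => 1))).
  assert (Hr : Rbar_lt (Rabs x) (CV_radius a)).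
  { unfold a. rewrite !CV_radius_derive. exact (rep_rad _ _ rep_geom x Hx). }
  assert (H := ex_series_lim_0 _ (CV_disk_inside a x Hr)).
  eapply is_lim_seq_ext; [|exact H]. intros n; cbv beta.
  unfold a, PS_derive. rewrite Rabs_mult, <- RPow_abs. rewrite Rabs_pos_eq. ring.
  apply Rmult_le_pos. apply pos_INR. rewrite Rmult_1_r. apply pos_INR.
Qed.

Lemma vv_bound t k : 0 <= t <= 1 -> 0 <= vv t k <= (INR k + 1) * (INR k + 1).
Proof. intros Ht. assert (H := uu_bound t k Ht). unfold vv. split; nra. Qed.

Lemma Dp_pos t x : 0 <= t <= 1 -> Rabs x < 1 -> 0 < Dp t x.
Proof.
  intros Ht Hx. apply Rabs_def2 in Hx.
  replace (Dp t x) with ((1 - x) * (1 - 2 * (2*t*t-1) * x + x * x)) by (unfold Dp; ring).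
  apply Rmult_lt_0_compat; [lra|].
  destruct (Rle_lt_dec 0 x).
  - assert (0 <= x * (1 - (2*t*t-1))) by (apply Rmult_le_pos; nra). nra.
  - assert (0 <= (-x) * (1 + (2*t*t-1))) by (apply Rmult_le_pos; nra). nra.
Qed.

Lemma rep_vv t : 0 <= t <= 1 -> rep (fun x => (1 + x) / Dp t x) (vv t).
Proof.
  intros Ht x Hx.
  assert (HD := Dp_pos t x Ht Hx).
  assert (Hx' := Rabs_def2 _ _ Hx).
  set (l := (1 + x) / Dp t x).
  assert (Hmain : is_lim_seq (fun N => sum_f_R0 (fun k => vv t k * x ^ k) N) l).
  { apply (is_lim_seq_incr_n _ 2).
    set (Y := fun n => x ^ (n + 3) * EE t x n).
    assert (HY : is_lim_seq Y 0).
    { set (K := fun n => 12 * (INR (S (n+2)) * INR (S (S (n+2))) * Rabs x ^ (n+2))).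
      assert (HK : is_lim_seq K 0).
      { unfold K. replace (Finite 0) with (Rbar_mult 12 0) by (simpl; f_equal; ring).
        apply is_lim_seq_scal_l.
        apply (is_lim_seq_incr_n (fun n => INR (S n) * INR (S (S n)) * Rabs x ^ n) 2 0).
        apply lim_poly, Hx. }
      apply is_lim_seq_le_le with (u := fun n => - K n) (w := K); [| |exact HK].
      2:{ assert (H := proj1 (is_lim_seq_opp K 0) HK). simpl in H. rewrite Ropp_0 in H. exact H. }
      intros n.
      assert (HB : Rabs (EE t x n) <= 12 * ((INR (n+2) + 1) * (INR (n+2) + 1))).
      { apply Rabs_le. unfold EE.
        assert (L1 : INR n <= INR (n+2)) by (apply le_INR; lia).
        assert (L2 : INR (n+1) <= INR (n+2)) by (apply le_INR; lia).
        assert (B0 := vv_bound t n Ht). assert (B1 := vv_bound t (n+1) Ht). assert (B2 := vv_bound t (n+2) Ht).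
        assert (P0 : 0 <= INR n) by apply pos_INR.
        cbv zeta. destruct Hx'. assert (P1 : 0 <= INR (n+1)) by apply pos_INR. apply Ebound; nra. }
      assert (Hp : Rabs (Y n) <= K n).
      { unfold Y, K. rewrite Rabs_mult, <- RPow_abs.
        assert (r0 : 0 <= Rabs x) by apply Rabs_pos.
        assert (Hpw : Rabs x ^ (n+3) <= Rabs x ^ (n+2)).
        { replace (n+3)%nat with (S (n+2)) by lia. simpl. 
          assert (0 <= Rabs x ^ (n+2)) by (apply pow_le; lra). nra. }
        assert (Hpw0 : 0 <= Rabs x ^ (n+3)) by (apply pow_le; lra).
        assert (Hq : 12 * ((INR (n+2) + 1) * (INR (n+2) + 1)) <= 12 * (INR (S (n+2)) * INR (S (S (n+2))))).
        { rewrite !S_INR. assert (0 <= INR (n+2)) by apply pos_INR. nra. }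
        assert (0 <= Rabs (EE t x n)) by apply Rabs_pos.
        assert (0 <= 12 * (INR (S (n+2)) * INR (S (S (n+2))))) by (rewrite !S_INR; assert (0 <= INR (n+2)) by apply pos_INR; nra).
        apply Rle_trans with (Rabs x ^ (n+3) * (12 * (INR (S (n+2)) * INR (S (S (n+2)))))).
        - apply Rmult_le_compat_l; lra.
        - replace (12 * (INR (S (n + 2)) * INR (S (S (n + 2))) * Rabs x ^ (n + 2))) with
            (Rabs x ^ (n+2) * (12 * (INR (S (n+2)) * INR (S (S (n+2)))))) by ring.
          apply Rmult_le_compat_r; lra. }
      assert (H1 := Rle_abs (Y n)). assert (H2 := Rabs_maj2 (Y n)). lra. }
    assert (HL : is_lim_seq (fun n => (1 + x) / Dp t x + Y n * / Dp t x) ((1 + x) / Dp t x + 0 * / Dp t x)).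
    { apply is_lim_seq_plus'. apply is_lim_seq_const.
      exact (is_lim_seq_scal_r Y (/ Dp t x) 0 HY). }
    replace ((1 + x) / Dp t x + 0 * / Dp t x) with l in HL by (unfold l; ring).
    eapply is_lim_seq_ext; [|exact HL].
    intros n; cbv beta. 
    assert (E := partial t x n). unfold Y.
    apply (Rmult_eq_reg_l (Dp t x)); [|lra]. rewrite E. field. lra. }
  unfold is_pseries, is_series.
  assert (H : is_lim_seq (sum_n (fun k => scal (pow_n x k) (vv t k))) l).
  { eapply is_lim_seq_ext; [|exact Hmain]. intros N. rewrite sum_n_Reals. apply sum_eq.
    intros i _. rewrite scal_pow. reflexivity. }
  exact H.
Qed.

Definition cst (c : R) (n : nat) : R := match n with O => c | _ => 0 end.

Lemma rep_const c : rep (fun _ => c) (cst c).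
Proof.
  intros x Hx. unfold is_pseries, is_series.
  assert (H : is_lim_seq (sum_n (fun k => scal (pow_n x k) (cst c k))) c).
  { eapply is_lim_seq_ext; [|apply is_lim_seq_const]. intros N. cbv beta.
    rewrite sum_n_Reals. induction N as [|N IH].
    - cbn [sum_f_R0]. rewrite scal_pow. simpl. ring.
    - rewrite tech5, <- IH. rewrite scal_pow. simpl. ring. }
  exact H.
Qed.

Definition Wf (k : nat) (omega : R) := W (S k) omega.

Theorem theorem6 (m : nat) (omega : R) :
  (1 <= m)%nat -> -1 <= omega <= 1 ->
  absolutely_monotonic_on (W m omega) 0 1.
Proof.
  intros Hm Ho.
  set (t := sqrt ((1 + omega) / 2)).
  assert (Ht0 : 0 <= t) by apply sqrt_pos.
  assert (Htt : t * t = (1 + omega) / 2) by (apply sqrt_sqrt; lra).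
  assert (Ht : 0 <= t <= 1) by (split; nra).
  assert (Hom : omega = 2 * t * t - 1) by lra.
  assert (HG : amrep (fun x => (1 + x) / Dp t x - 1)).
  { exists (PS_plus (vv t) (cst (-1))). split.
    - intros [|n]; unfold PS_plus, plus; simpl.
      + unfold vv; simpl. lra.
      + assert (H := vv_bound t (S n) Ht). lra.
    - apply (rep_plus (fun x => (1 + x) / Dp t x) (fun _ => -1)).
      apply rep_vv, Ht. apply rep_const. }
  assert (HX2 : amrep (fun x => x * (x * (/ (1 - x) * / (1 - x))))).
  { apply am_x, am_x, am_mult; apply am_geom. }
  assert (H1 : amrep (W 1 omega)).
  { eapply am_ext; [|apply am_plus; [apply (am_scal (1/2)); [lra|exact HX2] | apply (am_scal (1/2)); [lra|exact HG]]].
    intros x Hx. cbv beta. apply Rabs_def2 in Hx.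
    assert (HD := Dp_pos t x Ht ltac:(apply Rabs_def1; lra)).
    assert (HQ : 0 < 1 - 2 * omega * x + x ^ 2).
    { replace (Dp t x) with ((1-x) * (1 - 2 * omega * x + x ^ 2)) in HD by (unfold Dp; rewrite Hom; ring).
      apply (Rmult_lt_reg_l (1 - x)); lra. }
    replace (Dp t x) with ((1-x) * (1 - 2 * omega * x + x ^ 2)) by (unfold Dp; rewrite Hom; ring).
    unfold W. simpl INR. simpl (_ ^ (1 + 1))%nat.
    replace (1+1)%nat with 2%nat by reflexivity. field. split; lra. }
  assert (Hall : forall k, amrep (W (S k) omega)).
  { induction k as [|k IH]; [exact H1|].
    eapply am_ext; [|apply am_plus; [apply am_mult; [exact IH|apply am_geom] | apply (am_scal (INR (S k))); [apply pos_INR|exact HX2]]].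
    intros x Hx. cbv beta. apply Rabs_def2 in Hx.
    assert (HD := Dp_pos t x Ht ltac:(apply Rabs_def1; lra)).
    assert (HQ : 0 < 1 - 2 * omega * x + x ^ 2).
    { replace (Dp t x) with ((1-x) * (1 - 2 * omega * x + x ^ 2)) in HD by (unfold Dp; rewrite Hom; ring).
      apply (Rmult_lt_reg_l (1 - x)); lra. }
    assert (HP : (1 - x) ^ (S k + 1) <> 0) by (apply pow_nonzero; lra).
    unfold W.
    replace (S (S k) + 1)%nat with (S (S k + 1)) by lia.
    change ((1 - x) ^ S (S k + 1)) with ((1 - x) * (1 - x) ^ (S k + 1)).
    rewrite (S_INR (S k)).
    field. repeat split; lra. }
  destruct m as [|k]; [lia|].
  intros n x Hx. apply (am_abs _ (Hall k) n x Hx).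
Qed.
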